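(* Let $d, n, D, k$ be positive integers, let $h:\mathbb{R}\to\mathbb{R}$ be any function (applied entrywise), let $\sigma$ denote the sigmoid function (applied entrywise), and let $W_o\in\mathbb{R}^{d\times kD}$, $W_s\in\mathbb{R}^{kD\times d}$, $W_1,\dots,W_k\in\mathbb{R}^{D\times d}$. For $X\in\mathbb{R}^{d\times n}$ define $$H(X)=\begin{bmatrix} h(W_1X)\\ h(W_1X)\circ h(W_2X)\\ \vdots\\ \prod_{m=1}^k h(W_mX)\end{bmatrix}\mathbf{1}_n\in\mathbb{R}^{kD\times 1},\qquad \mathrm{PoM}(X)=W_o\left[\sigma(W_sX)\circ \big(H(X)\mathbf{1}_n^\top\big)\right]\in\mathbb{R}^{d\times n},$$ where $\circ$ and $\prod$ denote entrywise (Hadamard) products, the blocks are stacked vertically, and $\mathbf{1}_n\in\mathbb{R}^n$ is the all-ones vector. Then $\mathrm{PoM}$ is permutation equivariant: for every $X\in\mathbb{R}^{d\times n}$ and every $n\times n$ permutation matrix $P$ (permuting columns), $\mathrm{PoM}(XP)=\mathrm{PoM}(X)P$.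
   Context: The columns of $X$ are viewed as a sequence (set) of $n$ tokens in $\mathbb{R}^d$; $\mathrm{PoM}$ is called the Polynomial Mixer of degree $k$. *)

(* Defs.v *)
From mathcomp Require Import all_boot all_fingroup all_algebra.
From mathcomp Require Import all_classical all_reals all_analysis.
Set Implicit Arguments. Unset Strict Implicit. Unset Printing Implicit Defensive.
Import GRing.Theory Num.Theory.
Local Open Scope ring_scope.

Definition sigmoid (R : realType) (x : R) : R := (1 + expR (- x))^-1.

(* block index and in-block index of row r of a vertical stack of k blocks of height D *)
Lemma blk_lt (k D : nat) (r : 'I_(k * D)) : (r %/ D < k)%N.
Proof. by rewrite ltn_divLR ?(ltn_ord r) //; case: D r => [|D] r //; rewrite muln0 in r *; case: r. Qed.

Lemma inblk_lt (k D : nat) (r : 'I_(k * D)) : (r %% D < D)%N.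
Proof. by rewrite ltn_mod; case: D r => [|D] r //; rewrite muln0 in r *; case: r. Qed.

(* H(X) : stacked blocks [h(W_1 X); h(W_1X)∘h(W_2X); ...; prod_{m=1}^k h(W_m X)] times 1_n *)
Definition PoM_H (R : realType) (d n D k : nat) (h : R -> R)
  (W : 'I_k -> 'M[R]_(D, d)) (X : 'M[R]_(d, n)) : 'cV[R]_(k * D) :=
  (\matrix_(r < k * D, t < n)
     \prod_(m < k | (m <= r %/ D)%N)
        h ((W m *m X) (Ordinal (inblk_lt r)) t)) *m const_mx 1.

Definition PoM (R : realType) (d n D k : nat) (h : R -> R)
  (Wo : 'M[R]_(d, k * D)) (Ws : 'M[R]_(k * D, d)) (W : 'I_k -> 'M[R]_(D, d))
  (X : 'M[R]_(d, n)) : 'M[R]_(d, n) :=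
  Wo *m (map2_mx (fun a b => a * b) (map_mx (@sigmoid R) (Ws *m X))
           (PoM_H h W X *m (const_mx 1 : 'rV[R]_n))).

(* Main.v *)
Require Import Defs.
From mathcomp Require Import all_boot all_fingroup all_algebra.
From mathcomp Require Import all_classical all_reals all_analysis.
Local Open Scope ring_scope.
Lemma mulperm (R : realType) m n (A : 'M[R]_(m,n)) (s : 'S_n) i j :
  (A *m perm_mx s) i j = A i ((s^-1)%g j).
Proof. by rewrite -{1}(invgK s) -col_permE mxE. Qed.

Theorem proposition1 (R : realType) (d n D k : nat)
  (hd : (0 < d)%N) (hn : (0 < n)%N) (hD : (0 < D)%N) (hk : (0 < k)%N)
  (h : R -> R) (Wo : 'M[R]_(d, k * D)) (Ws : 'M[R]_(k * D, d))
  (W : 'I_k -> 'M[R]_(D, d)) (X : 'M[R]_(d, n)) (s : 'S_n) :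
  PoM h Wo Ws W (X *m perm_mx s) = PoM h Wo Ws W X *m perm_mx s.
Proof.
have HH : PoM_H h W (X *m perm_mx s) = PoM_H h W X.
  apply/matrixP => i j; rewrite /PoM_H !mxE.
  rewrite (reindex_inj (@perm_inj _ s)) /=.
  apply: eq_bigr => t _; rewrite !mxE; congr (_ * _).
  apply: eq_bigr => m _; rewrite mulmxA mulperm permK //.
 
rewrite /PoM HH -mulmxA; congr (_ *m _).
rewrite mulmxA; apply/matrixP => i j; rewrite mulperm !mxE; congr (_ * _).
  by congr sigmoid; have := @mulperm R _ _ (Ws *m X) s i j; rewrite !mxE.
by apply: eq_bigr => t _; rewrite !mxE.
Qed.
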